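(* Let $(G_k)_{k\in\mathbb Z}$ be a gibonacci sequence and let $F_k$ denote the Fibonacci numbers. Let $r$, $n$, $t$, $m$ be integers with $r\ge1$, $n\ge 1$, such that $G_k\neq0$ for all $k$ with $t+1\le k\le n+t+r$. Then \begin{equation*} F_r \sum_{j = 1}^n \frac{(-1)^{rj} F_m^{n - j} F_{m - r}^{j - 1} G_{j + t + m}}{G_{j + t} G_{j + t + 1} \cdots G_{j + t + r}} = \frac{(-1)^{r(n - 1) + 1} F_{m - r}^n}{G_{n + t + 1} G_{n + t + 2} \cdots G_{n + t + r}} + \frac{(-1)^r F_m^n}{G_{t + 1} G_{t + 2} \cdots G_{t + r}}. \end{equation*}
   Context: A gibonacci sequence $(G_k)_{k\in\mathbb Z}$ is defined by arbitrary initial values $G_0=a$, $G_1=b$ (numbers, not both zero) and $G_k=G_{k-1}+G_{k-2}$ for all integers $k$. The Fibonacci numbers $F_k$ are the gibonacci sequence with $F_0=0$, $F_1=1$, extended to all integer indices by the same recurrence. The convention $0^0=1$ is used for powers. *)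

(* Defs.v *)
From mathcomp Require Import all_boot all_order all_algebra.
Set Implicit Arguments. Unset Strict Implicit. Unset Printing Implicit Defensive.
Import Order.TTheory GRing.Theory Num.Theory.
Local Open Scope ring_scope.

Section Gib.
Variable R : numFieldType.

Fixpoint gfwd (a b : R) (n : nat) : R * R :=
  match n with
  | 0%N => (a, b)
  | n'.+1 => let p := gfwd a b n' in (p.2, p.1 + p.2)
  end.

(* backward iteration: gbwd a b n = (G_{-n}, G_{-n+1}), using G_{k-2} = G_k - G_{k-1} *)
Fixpoint gbwd (a b : R) (n : nat) : R * R :=
  match n with
  | 0%N => (a, b)
  | n'.+1 => let p := gbwd a b n' in (p.2 - p.1, p.1)
  end.

Definition gib (a b : R) (k : int) : R :=
  match k with
  | Posz n => (gfwd a b n).1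
  | Negz n => (gbwd a b n.+1).1
  end.

Definition fib (k : int) : R := gib 0 1 k.

End Gib.

(* Main.v *)
Require Import Defs.
From mathcomp Require Import all_boot all_order all_algebra.
From mathcomp Require Import zify ring lra.
Import Order.TTheory GRing.Theory Num.Theory.
Local Open Scope ring_scope.

Section S.
Variable R : numFieldType.
Implicit Types (a b : R).

Lemma gibS2 a b (k : int) : gib a b (k + 2) = gib a b (k + 1) + gib a b k.
Proof.
case: k => [n|[|[|n]]].
- have -> : n%:Z + 2 = (n.+2)%:Z by lia.
  have -> : n%:Z + 1 = (n.+1)%:Z by lia.
  by rewrite /gib /= addrC.
- rewrite /gib /=. ring.
- rewrite /gib /=. ring.
- have -> : Negz n.+2 + 2 = Negz n by rewrite !NegzE; lia.
  have -> : Negz n.+2 + 1 = Negz n.+1 by rewrite !NegzE; lia.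
  rewrite /gib /=. ring.
Qed.

Lemma int_ind2 (P : int -> Prop) : P 0 -> P 1 ->
  (forall k, P k -> P (k+1) -> P (k+2)) ->
  (forall k, P (k+1) -> P (k+2) -> P k) -> forall k, P k.
Proof.
move=> H0 H1 Hf Hb.
have pos : forall n : nat, P n%:Z /\ P (n%:Z + 1).
  elim=> [|n [IH1 IH2]]; first by split.
  split; first by rewrite intS addrC.
  have := Hf _ IH1 IH2. by rewrite intS (addrC 1) -addrA.
have neg : forall n : nat, P (- n%:Z) /\ P (- n%:Z + 1).
  elim=> [|n [IH1 IH2]]; first by split.
  have e1 : - (n.+1)%:Z + 1 = - n%:Z by lia.
  have e2 : - (n.+1)%:Z + 2 = - n%:Z + 1 by lia.
  split; last by rewrite e1.
  by apply: Hb; rewrite ?e1 ?e2.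
case=> n; first by case: (pos n).
by rewrite NegzE; case: (neg n.+1).
Qed.

Lemma fibm1 : fib R (-1) = 1.
Proof. by rewrite /fib /gib /= subr0. Qed.
Lemma fib0 : fib R 0 = 0. Proof. by []. Qed.
Lemma fib1 : fib R 1 = 1. Proof. by []. Qed.

Lemma gib_shift a b (k j : int) :
  gib a b (k + j) = fib R j * gib a b (k + 1) + fib R (j - 1) * gib a b k.
Proof.
elim/int_ind2: j.
- by rewrite addr0 sub0r fibm1 fib0; ring.
- by rewrite subrr fib1 fib0; ring.
- move=> j IH1 IH2.
  have e1 := gibS2 a b (k + j).
  have e2 := gibS2 0 1 j.
  have e3 := gibS2 0 1 (j - 1).
  have -> : k + (j + 2) = k + j + 2 by lia.
  have -> : j + 2 - 1 = j + 1 by lia.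
  have E1 : k + j + 1 = k + (j + 1) by lia.
  have E2 : j - 1 + 2 = j + 1 by lia.
  have E3 : j - 1 + 1 = j by lia.
  have E4 : j + 1 - 1 = j by lia.
  rewrite E2 E3 in e3. rewrite E1 in e1. rewrite E4 in IH2.
  rewrite /fib in IH1 IH2 *.
  rewrite e1 e2 IH1 IH2 e3. ring.
- move=> j IH1 IH2.
  have e1 := gibS2 a b (k + j).
  have e2 := gibS2 0 1 j.
  have e3 := gibS2 0 1 (j - 1).
  have E0 : k + (j + 2) = k + j + 2 by lia.
  have E5 : j + 2 - 1 = j + 1 by lia.
  have E1 : k + j + 1 = k + (j + 1) by lia.
  have E2 : j - 1 + 2 = j + 1 by lia.
  have E3 : j - 1 + 1 = j by lia.
  have E4 : j + 1 - 1 = j by lia.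
  rewrite E2 E3 in e3. rewrite E1 in e1. rewrite E4 in IH1. rewrite E0 E5 in IH2.
  rewrite /fib in IH1 IH2 *.
  have -> : gib a b (k+j) = gib a b (k+j+2) - gib a b (k+(j+1)) by rewrite e1; ring.
  rewrite IH1 IH2 e2 e3. ring.
Qed.

Lemma docagne (r : nat) : forall m : int,
  fib R m * fib R (r%:Z - 1) - fib R r%:Z * fib R (m - 1) = (-1) ^+ r * fib R (m - r%:Z).
Proof.
elim: r => [|r IH] m.
- by rewrite sub0r fibm1 fib0 subr0 expr0; ring.
- have IH' := IH (m - 1).
  have e1 := gibS2 0 1 (r%:Z - 1).
  have e2 := gibS2 0 1 (m - 2).
  have E1 : r%:Z - 1 + 2 = (r.+1)%:Z by lia.
  have E2 : r%:Z - 1 + 1 = r%:Z by lia.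
  have E3 : (r.+1)%:Z - 1 = r%:Z by lia.
  have E4 : m - 2 + 2 = m by lia.
  have E5 : m - 2 + 1 = m - 1 by lia.
  have E6 : m - 1 - 1 = m - 2 by lia.
  have E7 : m - 1 - r%:Z = m - (r.+1)%:Z by lia.
  rewrite ?E1 ?E2 ?E3 ?E4 ?E5 ?E6 ?E7 in e1 e2 IH' *.
  rewrite /fib in e1 e2 IH' *.
  rewrite e1 e2 exprS -mulrA -IH'.
  move: (gib 0 1 (m-1)) (gib 0 1 (m-2)) (gib 0 1 r) (gib 0 1 (r%:Z-1)) => x y z w. ring.
Qed.

Lemma docagneG a b (r : nat) (m x : int) :
  fib R m * gib a b (x + r%:Z) - fib R r%:Z * gib a b (x + m)
  = (-1) ^+ r * fib R (m - r%:Z) * gib a b x.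
Proof.
rewrite (gib_shift a b x r%:Z) (gib_shift a b x m) -docagne.
move: (gib a b (x+1)) (gib a b x) => u v. ring.
Qed.
End S.

Lemma alg (R : numFieldType) (Fr Fm Fmr G A B Q0 Q1 s sg e w : R) :
  A != 0 -> B != 0 -> Q0 != 0 -> A * Q1 = Q0 * B ->
  Fm * B - Fr * G = s * Fmr * A ->
  Fr * (s * sg * e * w * G / (Q0 * B)) =
  - (s * (s * sg * e * (Fmr * w) / Q1)) - - (s * (sg * (Fm * e) * w / Q0)).
Proof.
move=> hA hB hQ0 hQ key.
have -> : Q1 = Q0 * B / A by rewrite -hQ; field.
have hG : Fr * G = Fm * B - s * Fmr * A by rewrite -key; ring.
rewrite (_ : Fr * (s * sg * e * w * G / (Q0 * B)) = s * sg * e * w * (Fr * G) / (Q0 * B)); last by ring.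
rewrite hG. field. by rewrite hA hB hQ0.
Qed.
Theorem mainTheorem8 (R : numFieldType) (a b : R) (r n : nat) (t m : int) :
  ~ (a = 0 /\ b = 0) ->
  (1 <= r)%N -> (1 <= n)%N ->
  (forall k : int, t + 1 <= k <= n%:Z + t + r%:Z -> gib a b k != 0) ->
  fib R r%:Z *
    \sum_(1 <= j < n.+1)
      ((-1) ^+ (r * j) * fib R m ^+ (n - j) * fib R (m - r%:Z) ^+ (j - 1)
         * gib a b (j%:Z + t + m)
       / \prod_(i < r.+1) gib a b (j%:Z + t + i%:Z))
  = (-1) ^+ (r * (n - 1) + 1) * fib R (m - r%:Z) ^+ n
      / \prod_(1 <= i < r.+1) gib a b (n%:Z + t + i%:Z)
    + (-1) ^+ r * fib R m ^+ n
      / \prod_(1 <= i < r.+1) gib a b (t + i%:Z).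
Proof.
move=> _ r1 n1 Hnz.
set s := (-1 : R) ^+ r.
set Qd := fun j : nat => \prod_(i < r) gib a b (j%:Z + t + (i.+1)%:Z).
have Qeq : forall x : int, \prod_(1 <= i < r.+1) gib a b (x + i%:Z)
                          = \prod_(i < r) gib a b (x + (i.+1)%:Z).
  by move=> x; rewrite big_add1 /= big_mkord.
have Hq : forall j, (j <= n)%N -> Qd j != 0.
  move=> j hj; apply/prodf_neq0 => i _; apply: Hnz.
  have := ltn_ord i; lia.
set T := fun k : nat => (-1) ^+ (r * k) * fib R m ^+ (n - k) * fib R (m - r%:Z) ^+ k / Qd k.
rewrite big_distrr /= big_add1 /=.
rewrite (telescope_sumr_eq (fun k => - (s * T k))); last first.
  move=> k /andP [_ hk].
  change (gfwd 0 1 r).1 with (fib R r%:Z).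
  set x := k.+1%:Z + t.
  have hA : gib a b x != 0 by apply: Hnz; lia.
  have hB : gib a b (x + r%:Z) != 0 by apply: Hnz; lia.
  have hQ0 := Hq k (ltnW hk).
  have P1 : \prod_(i<r.+1) gib a b (x + i%:Z) = gib a b x * Qd k.+1.
    by rewrite big_ord_recl addr0.
  have P2 : \prod_(i<r.+1) gib a b (x + i%:Z) = Qd k * gib a b (x + r%:Z).
    rewrite big_ord_recr /=; congr (_ * _); apply: eq_bigr => i _; congr gib; lia.
  have key := @docagneG R a b r m x.
  rewrite /T.
  have -> : (n - k = (n - k.+1).+1)%N by lia.
  have -> : (k.+1 - 1 = k)%N by lia.
  rewrite mulnS exprD -/s !exprS P2.
  apply: (@alg R _ _ _ _ (gib a b x)) => //; by rewrite -P1 P2.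

  done.
rewrite /T /Qd /= Qeq Qeq.
have hs : (-1) ^+ (r * (n - 1) + 1) = - (s * (-1) ^+ (r * n)) :> R.
  rewrite /s -exprD.
  have -> : (r + r * n = r * (n - 1) + 1 + (2 * r - 1))%N by nia.
  rewrite [in RHS]exprD -mulrN -[LHS]mulr1; congr (_ * _).
  have -> : (2 * r - 1 = (2 * (r - 1)).+1)%N by lia.
  by rewrite exprS exprM sqrrN expr1n expr1n mulr1 opprK.
rewrite hs subnn subn0 muln0 !expr0 add0r.
set P := \prod_(i < r) _.
set P' := \prod_(i < r) _.
ring.
Qed.
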